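(* Let $N\ge2$, $D>0$, $b_1,\dots,b_N>0$, $0<r_1<\cdots<r_N$, and let $$P_N(\lambda)=D\prod_{j=1}^N(\lambda+r_j)-\sum_{i=1}^N b_i\prod_{j\neq i}(\lambda+r_j),$$ with roots $a_1>a_2>\cdots>a_N$. Set $$b:=\min_i b_i,\quad B:=\max_i b_i,\quad r:=\min_{1\le i\le N-1}(r_{i+1}-r_i),$$ $$\mu:=\min\Big\{\frac{b\,r^{N-1}}{4D(2r_N)^{N-1}+4NB(2r_N)^{N-2}+1},\ \frac r4,\ \frac{r_1}4\Big\}.$$ Then $$|P_N(\lambda)|\ge\frac{b\,r^{N-1}}{2}>0\qquad\text{for all }\lambda\in\bigcup_{j=1}^N[-r_j-\mu,-r_j+\mu],$$ and consequently $|a_i-a_j|\ge2\mu$ for all $1\le i<j\le N$.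
   Context: Standing assumptions: $D>0$, $b_i>0$, $0<r_1<\cdots<r_N$. The roots of $P_N$ are real, simple and interlace as $-r_N<a_N<-r_{N-1}<\cdots<-r_1<a_1$. *)

(* Defs.v *)
From mathcomp Require Import all_boot all_order all_algebra.
Set Implicit Arguments. Unset Strict Implicit. Unset Printing Implicit Defensive.
Import Order.TTheory GRing.Theory Num.Theory.
Local Open Scope ring_scope.

(* Indices are 0-based: r 0, ..., r (N-1) stand for r_1, ..., r_N, etc. *)

Definition PN {R : realFieldType} (N : nat) (D : R) (b r : nat -> R) (x : R) : R :=
  D * \prod_(j < N) (x + r j)
  - \sum_(i < N) b i * \prod_(j < N | j != i) (x + r j).

Definition bmin {R : realFieldType} (N : nat) (b : nat -> R) : R :=
  \big[Num.min/b 0%N]_(i < N) b i.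

Definition bmax {R : realFieldType} (N : nat) (b : nat -> R) : R :=
  \big[Num.max/b 0%N]_(i < N) b i.

Definition rgap {R : realFieldType} (N : nat) (r : nat -> R) : R :=
  \big[Num.min/(r 1%N - r 0%N)]_(i < N.-1) (r i.+1 - r i).

Definition mu {R : realFieldType} (N : nat) (D : R) (b r : nat -> R) : R :=
  Num.min
    (Num.min
       (bmin N b * rgap N r ^+ (N.-1) /
          (4 * D * (2 * r N.-1) ^+ (N.-1)
           + 4 * N%:R * bmax N b * (2 * r N.-1) ^+ (N - 2) + 1))
       (rgap N r / 4))
    (r 0%N / 4).

(* Main.v *)
Require Import Defs.
From mathcomp Require Import all_boot all_order all_algebra ring lra zify.
Import Order.TTheory GRing.Theory Num.Theory.
Local Open Scope ring_scope.

Lemma prod_c1 (R : realFieldType) N (j : 'I_N) (c : R) :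
  \prod_(k < N | k != j) c = c ^+ N.-1.
Proof.
rewrite prodr_const; congr (_ ^+ _).
transitivity #|predC1 j|; [apply: eq_card => k; by rewrite !inE | by rewrite cardC1 card_ord].
Qed.

Lemma card_c1 N (j : 'I_N) : #|[pred k : 'I_N | k != j]| = N.-1.
Proof. transitivity #|predC1 j|; [apply: eq_card => k; by rewrite !inE | by rewrite cardC1 card_ord]. Qed.

Lemma prod_c2 (R : realFieldType) N (i j : 'I_N) (c : R) : i != j ->
  \prod_(k < N | (k != i) && (k != j)) c = c ^+ (N - 2).
Proof.
move=> ij; rewrite prodr_const; congr (_ ^+ _).
have h := cardD1 j [pred k : 'I_N | k != i].
rewrite inE eq_sym ij /= card_c1 in h.
have -> : #|[pred k : 'I_N | (k != i) && (k != j)]| = #|[predD1 [pred k : 'I_N | k != i] & j]|.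
  by apply: eq_card => k; rewrite !inE andbC.
by rewrite subn2 h add1n.
Qed.

Lemma sum_c1 (R : realFieldType) N (j : 'I_N) (c : R) :
  \sum_(k < N | k != j) c = c *+ N.-1.
Proof. rewrite sumr_const; congr (_ *+ _). exact: card_c1. Qed.

Lemma bern (R : realFieldType) (x y : R) n : 0 <= y -> y <= x ->
  x ^+ n.+1 - n.+1%:R * y * x ^+ n <= (x - y) ^+ n.+1.
Proof.
move=> hy hyx; elim: n => [|n IH]; first by rewrite !expr1 expr0 mulr1 mul1r.
rewrite [(x - y) ^+ n.+2]exprS.
apply: le_trans (ler_wpM2l _ IH); last by rewrite subr_ge0.
have hX : 0 <= x ^+ n by rewrite exprn_ge0 // (le_trans hy).
rewrite (_ : (x - y) * (x ^+ n.+1 - n.+1%:R * y * x ^+ n) =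
   x ^+ n.+2 - n.+2%:R * y * x ^+ n.+1 + n.+1%:R * (y * y * x ^+ n)).
  rewrite lerDl; apply: mulr_ge0 => //; apply: mulr_ge0 => //; exact: mulr_ge0.
rewrite !exprS; ring.
Qed.

Lemma PN_dec (R : realFieldType) N D (b r : nat -> R) x (j : 'I_N) :
  PN N D b r x = - b j * \prod_(k < N | k != j) (x + r k)
   + (x + r j) * (D * \prod_(k < N | k != j) (x + r k)
      - \sum_(i < N | i != j) b i * \prod_(k < N | (k != i) && (k != j)) (x + r k)).
Proof.
rewrite /PN [\prod_(k < N) _](bigD1 j) //= [\sum_(i < N) _](bigD1 j) //=.
have -> : \sum_(i < N | i != j) b i * \prod_(k < N | k != i) (x + r k) =
  (x + r j) * \sum_(i < N | i != j) b i * \prod_(k < N | (k != i) && (k != j)) (x + r k).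
  rewrite big_distrr /=; apply: eq_bigr => i ij.
  rewrite (bigD1 j) /=; last by rewrite eq_sym.
  ring.
ring.
Qed.

Lemma rmono (R : realFieldType) N (r : nat -> R) :
  (forall i, (i.+1 < N)%N -> r i < r i.+1) ->
  forall i k, (i <= k)%N -> (k < N)%N -> r i <= r k.
Proof.
move=> hr i; elim=> [|k IH] hik hk.
  by move: hik; rewrite leqn0 => /eqP ->.
move: hik; rewrite leq_eqVlt => /orP [/eqP ->|hlt]; first by [].
apply: le_trans (IH hlt (ltnW hk)) (ltW (hr k hk)).
Qed.

Lemma part1 (R : realFieldType) (n : nat) (D : R) (b r : nat -> R) :
  0 < D -> (forall i, (i < n.+2)%N -> 0 < b i) -> 0 < r 0%N ->
  (forall i, (i.+1 < n.+2)%N -> r i < r i.+1) ->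
  (0 < mu n.+2 D b r) /\ (0 < bmin n.+2 b * rgap n.+2 r ^+ n.+1 / 2) /\
  forall x j, (j < n.+2)%N -> `|x + r j| <= mu n.+2 D b r ->
  bmin n.+2 b * rgap n.+2 r ^+ n.+1 / 2 <= `|PN n.+2 D b r x|.
Proof.
move=> hD hb hr0 hr.
have rm := rmono _ _ _ hr.
have rpos : forall k, (k < n.+2)%N -> 0 < r k.
  move=> k hk; apply: lt_le_trans hr0 (rm _ _ _ hk); done.
set g := rgap n.+2 r.
have gpos : 0 < g.
  rewrite /g /rgap; apply: (big_ind (fun y => 0 < y)).
  - by rewrite subr_gt0 hr.
  - by move=> y z hy hz; rewrite lt_min hy hz.
  - move=> i _; rewrite subr_gt0 hr //; have := ltn_ord i; rewrite /=; lia.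
have gle : forall k, (k.+1 < n.+2)%N -> g <= r k.+1 - r k.
  move=> k hk; rewrite /g /rgap; exact: (bigmin_le _ (@Ordinal n.+1 k hk)).
have g0 : g <= r 1%N - r 0%N by rewrite /g /rgap; exact: bigmin_le_id.
have r1N : r 1%N <= r n.+1 by apply: rm.
set M := 2 * r n.+1.
set bm := bmin n.+2 b.
have bmpos : 0 < bm.
  rewrite /bm /bmin; apply: (big_ind (fun y => 0 < y)).
  - exact: hb.
  - by move=> y z hy hz; rewrite lt_min hy hz.
  - move=> i _; exact: hb.
have bmle : forall j, (j < n.+2)%N -> bm <= b j.
  move=> j hj; rewrite /bm /bmin; exact: (bigmin_le _ (@Ordinal n.+2 j hj)).
set B := bmax n.+2 b.
have bB : forall j, (j < n.+2)%N -> b j <= B.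
  move=> j hj; rewrite /B /bmax; exact: (le_bigmax _ _ (@Ordinal n.+2 j hj)).
have bmB : bm <= B by apply: le_trans (bmle 0%N _) (bB 0%N _).
have Bpos : 0 < B by apply: lt_le_trans bmB.
have Mpos : 0 < M by rewrite /M mulr_gt0 // rpos.
set Den := 4 * D * M ^+ n.+1 + 4 * n.+2%:R * B * M ^+ n + 1.
have Denpos : 0 < Den.
  rewrite /Den; apply: ltr_wpDl; last by [].
  have hM : 0 <= M by exact: ltW.
  by apply: addr_ge0; rewrite !mulr_ge0 // ?exprn_ge0 // ltW.
have cpos : 0 < bm * g ^+ n.+1 by rewrite mulr_gt0 // exprn_gt0.
set m := mu n.+2 D b r.
have Em : m = Num.min (Num.min (bm * g ^+ n.+1 / Den) (g / 4)) (r 0%N / 4).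
  by rewrite /m /mu /= subn2.
have m1 : m <= bm * g ^+ n.+1 / Den by rewrite Em ge_min ge_min lexx.
have m2 : m <= g / 4 by rewrite Em ge_min ge_min lexx orbT.
have m3 : m <= r 0%N / 4 by rewrite Em ge_min lexx orbT.
have mpos : 0 < m.
  by rewrite Em !lt_min !divr_gt0.
split => //.
split; first by rewrite divr_gt0.
move=> x j hj hx.
pose j' := Ordinal hj.
have ej : (j' : nat) = j by [].
rewrite (PN_dec _ _ _ _ _ _ j') ej.
set Q := \prod_(k < n.+2 | k != j') (x + r k).
set E := (D * Q - _).
have hxm : - m <= x + r j <= m by rewrite -ler_norml.
have hk1 : forall k : 'I_n.+2, k != j' -> g - m <= `|x + r k|.
  move=> k kj.
  have kj' : (k : nat) != j by [].
  have hk := ltn_ord k.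
  case/andP: hxm => h1 h2.
  rewrite ler_normr; case: (ltngtP k j) => hkj.
  - apply/orP; right.
    have : r k.+1 <= r j by apply: rm.
    have := gle k (leq_ltn_trans hkj hj). move=> *; lra.
  - apply/orP; left.
    have : r j.+1 <= r k by apply: rm.
    have := gle j (leq_ltn_trans hkj hk). move=> *; lra.
  - by rewrite hkj eqxx in kj'.
have hk2 : forall k : 'I_n.+2, `|x + r k| <= M.
  move=> k; have hk := ltn_ord k.
  case/andP: hxm => h1 h2.
  have := rpos _ hk; have := rpos _ hj.
  have : r k <= r n.+1 by apply: rm => //; rewrite -ltnS.
  have : r j <= r n.+1 by apply: rm => //; rewrite -ltnS.
  have : r 0%N <= r n.+1 by apply: rm.
  move=> *; rewrite ler_norml /M; apply/andP; split; lra.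
have gm : 0 <= g - m by rewrite subr_ge0 (le_trans m2) // ler_pdivrMr //; move=> *; lra.
have hQ : (g - m) ^+ n.+1 <= `|Q|.
  rewrite /Q normr_prod -(prod_c1 _ _ j').
  by apply: ler_prod => k kj; rewrite gm hk1.
have hM0 : 0 <= M by exact: ltW.
have hE : `|E| <= D * M ^+ n.+1 + n.+2%:R * B * M ^+ n.
  rewrite /E; apply: le_trans (ler_normB _ _) _.
  apply: lerD.
    rewrite normrM gtr0_norm //; apply: ler_wpM2l; first exact: ltW.
    rewrite /Q normr_prod -(prod_c1 _ _ j' M).
    by apply: ler_prod => k _; rewrite normr_ge0 hk2.
  apply: le_trans (ler_norm_sum _ _ _) _.
  apply: le_trans (_ : \sum_(i < n.+2 | i != j') B * M ^+ n <= _).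
    apply: ler_sum => i ij; rewrite normrM normr_prod.
    rewrite gtr0_norm ?hb //.
    apply: ler_pM; first exact: ltW (hb _ (ltn_ord i)).
    - by apply: prodr_ge0 => k _.
    - exact: bB.
    - have := prod_c2 _ _ i j' M ij; rewrite subn2 /= => <-.
      by apply: ler_prod => k _; rewrite normr_ge0 hk2.
  rewrite sum_c1 /=.
  have -> : B * M ^+ n *+ n.+1 = n.+1%:R * B * M ^+ n by ring.
  apply: ler_wpM2r; first exact: exprn_ge0.
  apply: ler_wpM2r; first exact: ltW.
  by rewrite ler_nat.
have hmD : m * Den <= bm * g ^+ n.+1 by rewrite -ler_pdivlMr.
have gM : g <= M.
  have : r 0%N <= r n.+1 by apply: rm.
  rewrite /M; move=> *; lra.
have hgM : g ^+ n <= M ^+ n by apply: lerXn2r; rewrite ?nnegrE ?(ltW gpos) ?(ltW Mpos).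
have hgn : 4 * n.+2%:R * m * g ^+ n <= g ^+ n.+1.
  have h1 : B * (4 * n.+2%:R * m * g ^+ n) <= B * g ^+ n.+1.
    apply: (@le_trans _ _ (m * Den)); last first.
      apply: le_trans hmD _; apply: ler_wpM2r => //; exact: exprn_ge0 (ltW gpos).
    have e1 : B * (4 * n.+2%:R * m * g ^+ n) = m * (4 * n.+2%:R * B) * g ^+ n by ring.
    rewrite e1; apply: le_trans (_ : m * (4 * n.+2%:R * B) * M ^+ n <= _).
      apply: ler_wpM2l hgM; apply: mulr_ge0; first exact: ltW. apply: mulr_ge0; last exact: ltW. by apply: mulr_ge0; rewrite ?ler0n.
    rewrite -mulrA; apply: ler_wpM2l; first exact: ltW.
    have : 0 <= 4 * D * M ^+ n.+1 by rewrite mulr_ge0 ?exprn_ge0 // mulr_ge0 ?ltW.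
    rewrite /Den; move=> *; lra.
  by rewrite ler_pM2l in h1.
have hb2 := bern _ g m n (ltW mpos) (le_trans m2 (_ : g / 4 <= g)).
have hb3 : g ^+ n.+1 - n.+1%:R * m * g ^+ n <= (g - m) ^+ n.+1.
  apply: hb2; rewrite ler_pdivrMr //; move=> *; lra.
have A0 := lerB_normD (- b j * Q) ((x + r j) * E).
rewrite normrM normrN (gtr0_norm (hb _ hj)) normrM in A0.
have A1 : bm * `|Q| <= b j * `|Q| by apply: ler_wpM2r (bmle _ hj).
have A2 : bm * (g ^+ n.+1 - n.+1%:R * m * g ^+ n) <= bm * `|Q|.
  apply: ler_wpM2l (le_trans hb3 hQ); exact: ltW.
have hG : 0 <= m * g ^+ n by rewrite mulr_ge0 ?exprn_ge0 ?ltW.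
have A3 : n.+1%:R * m * g ^+ n <= g ^+ n.+1 / 4.
  rewrite ler_pdivlMr //.
  have e2 : n.+2%:R = n.+1%:R + 1 :> R by rewrite natr1.
  rewrite e2 in hgn.
  have e3 : n.+1%:R * m * g ^+ n * 4 = 4 * (n.+1%:R + 1) * m * g ^+ n - 4 * (m * g ^+ n) by ring.
  rewrite e3; move: hgn hG; set u := _ * m * g ^+ n; move=> *; lra.
have A3' : bm * (n.+1%:R * m * g ^+ n) <= bm * (g ^+ n.+1 / 4).
  apply: ler_wpM2l A3; exact: ltW.
have A4 : `|x + r j| * `|E| <= m * (D * M ^+ n.+1 + n.+2%:R * B * M ^+ n).
  by apply: ler_pM.
have A5 : m * (D * M ^+ n.+1 + n.+2%:R * B * M ^+ n) <= bm * g ^+ n.+1 / 4.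
  rewrite ler_pdivlMr //; apply: le_trans hmD.
  have e4 : m * (D * M ^+ n.+1 + n.+2%:R * B * M ^+ n) * 4 = m * (4 * D * M ^+ n.+1 + 4 * n.+2%:R * B * M ^+ n) by ring.
  rewrite e4; apply: ler_wpM2l; first exact: ltW.
  rewrite /Den; lra.
move: A0 A1 A2 A3' A4 A5.
set P1 := `|Q|. set P2 := `|x + r j| * `|E|. set G1 := g ^+ n.+1. set G2 := n.+1%:R * m * g ^+ n.
set P3 := m * _.
move=> *; nra.
Qed.

Lemma PN_div (R : realFieldType) N D (b r : nat -> R) y :
  (forall k : 'I_N, y + r k != 0) ->
  PN N D b r y = (\prod_(k < N) (y + r k)) * (D - \sum_(i < N) b i / (y + r i)).
Proof.
move=> hy; rewrite /PN mulrBr mulr_sumr; congr (_ - _); first by rewrite mulrC.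
apply: eq_bigr => i _; rewrite [\prod_(k < N) _](bigD1 i) //=.
by field; apply: hy.
Qed.

Lemma sep (R : realFieldType) N D (b r : nat -> R) (m x y : R) :
  (1 <= N)%N -> (forall i, (i < N)%N -> 0 < b i) ->
  0 < m -> x < y -> PN N D b r x = 0 -> PN N D b r y = 0 ->
  (forall k, (k < N)%N -> m < `|x + r k|) ->
  (forall k, (k < N)%N -> m < `|y + r k|) ->
  exists k, (k < N)%N /\ x < - r k /\ - r k < y.
Proof.
move=> hN hb hm hxy hPx hPy hx hy.
case: (boolP [exists k : 'I_N, (x < - r k) && (- r k < y)]).
  by case/existsP => k /andP [h1 h2]; exists k; split.
move/existsPn => hn.
have nzx : forall k : 'I_N, x + r k != 0.
  move=> k; apply/eqP => h; have := hx _ (ltn_ord k); by rewrite h normr0 ltNge (ltW hm).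
have nzy : forall k : 'I_N, y + r k != 0.
  move=> k; apply/eqP => h; have := hy _ (ltn_ord k); by rewrite h normr0 ltNge (ltW hm).
have ppos : forall k : 'I_N, 0 < (x + r k) * (y + r k).
  move=> k; have hk := hn k; have h1 := nzx k; have h2 := nzy k.
  case: (ltgtP (x + r k) 0) => c1; last by rewrite c1 eqxx in h1.
  - case: (ltgtP (y + r k) 0) => c2; last by rewrite c2 eqxx in h2.
    + nra.
    + exfalso; move/negP: hk; apply; apply/andP; split; lra.
  - have c2 : 0 < y + r k by lra.
    nra.
have ex := PN_div _ _ D b r x nzx; have ey := PN_div _ _ D b r y nzy.
rewrite hPx in ex; rewrite hPy in ey.
have px : \prod_(k < N) (x + r k) != 0 by apply/prodf_neq0 => k _; exact: nzx.
have py : \prod_(k < N) (y + r k) != 0 by apply/prodf_neq0 => k _; exact: nzy.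
move/esym/eqP: ex; rewrite mulf_eq0 (negbTE px) /= subr_eq0 => /eqP ex.
move/esym/eqP: ey; rewrite mulf_eq0 (negbTE py) /= subr_eq0 => /eqP ey.
have : \sum_(i < N) b i / (y + r i) < \sum_(i < N) b i / (x + r i).
  apply: ltr_sum.
    apply/hasP; exists (@Ordinal N 0 hN); first by rewrite mem_index_enum.
    by [].
  move=> i _.
  rewrite -subr_lt0.
  have e : b i / (y + r i) - b i / (x + r i) = b i * (x - y) / ((x + r i) * (y + r i)).
    by field; apply/andP; split.
  rewrite e ltr_pdivrMr ?ppos // mul0r pmulr_rlt0 ?subr_lt0 //; exact: hb.
by rewrite -ex -ey ltxx.
Qed.

Theorem lemma5p2 (R : realFieldType) (N : nat) (D : R) (b r a : nat -> R) :
  (2 <= N)%N ->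
  0 < D ->
  (forall i, (i < N)%N -> 0 < b i) ->
  0 < r 0%N ->
  (forall i, (i.+1 < N)%N -> r i < r i.+1) ->
  (* a_1 > a_2 > ... > a_N are the roots of P_N *)
  (forall i, (i < N)%N -> PN N D b r (a i) = 0) ->
  (forall i, (i.+1 < N)%N -> a i.+1 < a i) ->
  (forall x : R, (exists j, (j < N)%N /\ `|x + r j| <= mu N D b r) ->
     bmin N b * rgap N r ^+ (N.-1) / 2 <= `|PN N D b r x|)
  /\ 0 < bmin N b * rgap N r ^+ (N.-1) / 2
  /\ (forall i j, (i < j)%N -> (j < N)%N -> 2 * mu N D b r <= `|a i - a j|).
Proof.
move=> hN hD hb hr0 hr ha had.
case: N hN hb hr ha had => [|[|n]] // hN hb hr ha had.
have [mpos [cpos P1]] := part1 _ n D b r hD hb hr0 hr.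
split; first by move=> x [j [hj hx]]; exact: P1 x j hj hx.
split; first exact: cpos.
have far : forall i, (i < n.+2)%N -> forall k, (k < n.+2)%N -> mu n.+2 D b r < `|a i + r k|.
  move=> i hi k hk; rewrite ltNge; apply/negP => h; have := P1 _ _ hk h.
  by rewrite ha // normr0 leNgt cpos.
have amono : forall i j, (i <= j)%N -> (j < n.+2)%N -> - a i <= - a j.
  apply: (rmono _ _ (fun i => - a i)) => i hi; rewrite ltrN2; exact: had.
move=> i j hij hj.
have hi1 : (i.+1 < n.+2)%N by apply: leq_ltn_trans hij hj.
have hi : (i < n.+2)%N by apply: ltn_trans hi1.
have [k [hk [h1 h2]]] := sep _ _ D b r _ _ _ (isT : (1 <= n.+2)%N) hb mpos (had _ hi1) (ha _ hi1) (ha _ hi)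
   (far _ hi1) (far _ hi).
have f1 := far i hi k hk; have f2 := far i.+1 hi1 k hk.
rewrite gtr0_norm in f1; last by lra.
rewrite ltr0_norm in f2; last by lra.
have := amono _ _ hij hj.
move=> h3; apply: le_trans (ler_norm _); lra.
Qed.
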